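(* Let $G=(V,E)$ be an $r$-regular graph on a finite vertex set $V$ with $|V|$ even. Then $G$ is B-factorizable if and only if, for every HAP table $d\mapsto\{H(d),A(d)\}$ ($d\in\{1,\dots,r\}$), the polytope $P(G,HA)$ contains an integral point whenever it is non-empty. In particular, the complete graph on $V$ is B-factorizable if and only if for every HAP table, $P(K_{|V|},HA)$ contains an integral point whenever it is non-empty.
   Context: Let $V$ be a finite set with $|V|$ even. $K=\binom{V}{2}$ is the set of 2-element subsets of $V$. An equal partition of $V$ is an unordered pair $\{H,A\}$ of disjoint subsets with $H\cup A=V$ and $|H|=|A|=|V|/2$; $C=C(V)$ is the set of equal partitions. For $c=\{H,A\}\in C$, $B_c$ is the complete bipartite graph with parts $H$ and $A$. Vectors live in $\mathbb N^{K\cup C}$ with $\mathbb N=\{0,1,2,\dots\}$; $v|_K$ denotes the restriction to coordinates in $K$. For $E\subseteq K$, $\chi_E\in\{0,1\}^K$ is its indicator vector. For $E\subseteq K$ and $c\in C$, $\chi_{E,c}\in\mathbb N^{K\cup C}$ has $K$-components $\chi_E$ and $C$-components equal to the indicator of $c$. $PM(V)=\{\chi_{q,c}: c\in C,\ q\text{ a perfect matching of }B_c\}$. For $\mathcal M\subseteq\mathbb N^{K\cup C}$, $\mathbf N(\mathcal M)$ is the set of finite nonnegative integer combinations of elements of $\mathcal M$, and $\overline{\mathbf N}(\mathcal M)=\{v\in\mathbb N^{K\cup C}: kv\in\mathbf N(\mathcal M)\text{ for some integer }k\ge1\}$. A regular graph $G=(V,E)$ is B-factorizable if every $v\in\overline{\mathbf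 N}(PM(V))$ with $v|_K=\chi_E$ belongs to $\mathbf N(PM(V))$. For an $r$-regular graph $G=(V,E)$, a HAP table is a map assigning to each $d\in\{1,\dots,r\}$ an equal partition $\{H(d),A(d)\}\in C$. $P(G,HA)$ is the set of real vectors $(x_{e,d})_{e\in K,\,d\in\{1,\dots,r\}}$ satisfying: (1) $\sum_{d=1}^r x_{e,d}=1$ for every $e\in E$, and $x_{e,d}=0$ for every $e\in K\setminus E$ and every $d$; (2) for every $d$ and every $a\in V$, $\sum_{b\in V\setminus\{a\}}x_{\{a,b\},d}=1$; (3) $0\le x_{e,d}\le1$ for all $e\in E$ and all $d$; (4) $x_{\{a,b\},d}=0$ whenever $\{a,b\}\in E$ and $a,b$ are both in $H(d)$ or both in $A(d)$. *)

(* Defs.v *)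
From HB Require Import structures.
From mathcomp Require Import all_boot all_order all_algebra.
Set Implicit Arguments. Unset Strict Implicit. Unset Printing Implicit Defensive.
Import Order.TTheory GRing.Theory Num.Theory.

Section Defs.
Variable V : finType.

Definition K := {e : {set V} | #|e| == 2}.

(* C = equal partitions {H, A} of V, represented as the set of its two blocks *)
Definition C :=
  {P : {set {set V}} | [exists H : {set V}, (#|H|.*2 == #|V|) && (P == [set H; ~: H])]}.

(* e crosses c : e is not contained in a block of c, i.e. e is an edge of B_c *)
Definition crosses (c : C) (e : K) : bool :=
  [forall X in val c, ~~ (val e \subset X)].

Definition perfect_matching_of (c : C) (q : {set K}) : bool :=
  [forall e in q, crosses c e] &&
  [forall v : V, #|[set e in q | v \in val e]| == 1].

(* vectors in N^(K ∪ C) *)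
Definition vec := ((K -> nat) * (C -> nat))%type.

Definition PM (x : vec) : Prop :=
  exists (c : C) (q : {set K}), perfect_matching_of c q /\
    (forall e, x.1 e = nat_of_bool (e \in q)) /\ (forall c', x.2 c' = nat_of_bool (c' == c)).

Fixpoint all_in (M : vec -> Prop) (s : seq vec) : Prop :=
  if s is x :: s' then M x /\ all_in M s' else True.

Definition Ncone (M : vec -> Prop) (v : vec) : Prop :=
  exists s : seq vec, all_in M s /\
    (forall e, v.1 e = \sum_(x <- s) x.1 e) /\
    (forall c, v.2 c = \sum_(x <- s) x.2 c).

Definition scale_vec (k : nat) (v : vec) : vec :=
  (fun e => k * v.1 e, fun c => k * v.2 c).

Definition Nbar (M : vec -> Prop) (v : vec) : Prop :=
  exists k : nat, 0 < k /\ Ncone M (scale_vec k v).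

Definition regular (E : {set K}) (r : nat) : Prop :=
  forall a : V, #|[set e in E | a \in val e]| = r.

Definition B_factorizable (E : {set K}) : Prop :=
  forall v : vec, Nbar PM v -> (forall e, v.1 e = nat_of_bool (e \in E)) -> Ncone PM v.

(* P(G, HA) for a HAP table HA : 'I_r -> C  (d ∈ {1..r} indexed as 'I_r) *)
Definition in_P (R : realFieldType) (E : {set K}) (r : nat) (HA : 'I_r -> C)
  (x : K -> 'I_r -> R) : Prop :=
  ([/\ (forall e, e \in E -> \sum_(d < r) x e d = 1)
    , (forall e d, e \notin E -> x e d = 0)
    , (forall d (a : V), \sum_(e : K | a \in val e) x e d = 1)
    , (forall e d, e \in E -> (0 <= x e d) && (x e d <= 1))
    & (forall e d, e \in E -> ~~ crosses (HA d) e -> x e d = 0)])%R.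

Definition integral_point (R : realFieldType) r (x : K -> 'I_r -> R) : Prop :=
  exists z : K -> 'I_r -> int, forall e d, x e d = (z e d)%:~R%R.

Definition HAP_condition (R : realFieldType) (E : {set K}) (r : nat) : Prop :=
  forall HA : 'I_r -> C,
    (exists x, @in_P R E r HA x) -> exists x, @in_P R E r HA x /\ @integral_point R r x.

End Defs.

(* Main.v *)
Require Import Defs.
From HB Require Import structures.
From mathcomp Require Import all_boot all_order all_algebra.
From Stdlib Require Import Classical.
Set Implicit Arguments. Unset Strict Implicit. Unset Printing Implicit Defensive.
Import Order.TTheory GRing.Theory Num.Theory.

Open Scope ring_scope.

Lemma sum_enum_val (T : finType) (U : nmodType) (F : T -> U) :
  \sum_(i : T) F i = \sum_(j < #|T|) F (enum_val j).
Proof.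
rewrite (reindex (@enum_val T predT)) //.
by exists enum_rank => [j _|i _]; rewrite ?enum_valK ?enum_rankK.
Qed.

Lemma rat_sol_fun (R : realFieldType) (I J : finType) (a : J -> I -> nat) (b : J -> nat)
  (x : I -> R) : (forall j, \sum_i (a j i)%:R * x i = (b j)%:R) ->
  exists y : I -> rat, forall j, \sum_i (a j i)%:R * y i = (b j)%:R.
Proof.
move=> hx.
pose M : 'M[rat]_(#|I|, #|J|) := \matrix_(i, j) (a (enum_val j) (enum_val i))%:R.
pose bb : 'rV[rat]_#|J| := \row_j (b (enum_val j))%:R.
pose u : 'rV[R]_#|I| := \row_i x (enum_val i).
have hu : u *m map_mx ratr M = map_mx ratr bb.
  apply/rowP => j; rewrite !mxE rmorph_nat -hx [RHS]sum_enum_val.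
  apply: eq_bigr => i _.
  by rewrite !mxE rmorph_nat mulrC.
have: (map_mx (@ratr R) bb <= map_mx (@ratr R) M)%MS by apply/submxP; exists u.
rewrite map_submx => /submxP [u' hu'].
exists (fun i => u' 0 (enum_rank i)) => j.
have := congr1 (fun m : 'rV[rat]_#|J| => m 0 (enum_rank j)) hu'.
rewrite !mxE enum_rankK => ->.
rewrite sum_enum_val; apply: eq_bigr => i _.
by rewrite !mxE enum_rankK enum_valK mulrC.
Qed.

Close Scope ring_scope.

Open Scope ring_scope.

Lemma sum_pick (I : finType) (U : pzSemiRingType) (i0 : I) (P : bool) (f : I -> U) :
  \sum_i ((i == i0) && P)%:R * f i = P%:R * f i0.
Proof.
rewrite (bigD1 i0) //= eqxx /= big1 ?addr0 // => i /negbTE ->.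
by rewrite mul0r.
Qed.

Lemma rat_point_nonneg (R : realFieldType) (I J : finType) (a : J -> I -> nat) (b : J -> nat)
  (x : I -> R) : (forall i, 0 <= x i) ->
  (forall j, \sum_i (a j i)%:R * x i = (b j)%:R) ->
  exists y : I -> rat, (forall i, 0 <= y i) /\ forall j, \sum_i (a j i)%:R * y i = (b j)%:R.
Proof.
have [N] := ubnP #|[set i | x i != 0]|.
elim: N x => [//|N IH] x hN x0 hx.
case: (classic (exists w : I -> R, (exists i, 0 < w i) /\ (forall i, x i = 0 -> w i = 0) /\
   (forall j, \sum_i (a j i)%:R * w i = 0))).
  move=> [w [[i1 hi1] [wz ws]]].
  pose i0 := [arg min_(i < i1 | 0 < w i) (x i / w i)]%O.
  have [i0P i0min] : 0 < w i0 /\ forall i, 0 < w i -> x i0 / w i0 <= x i / w i.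
    by rewrite /i0; case: arg_minP => // j hj hmin; split.
  pose t := x i0 / w i0.
  have t0 : 0 <= t by rewrite divr_ge0 // ltW.
  pose x' i := x i - t * w i.
  apply: (IH x').
  - have sub : [set i | x' i != 0] \subset [set i | x i != 0].
      apply/subsetP => i; rewrite !inE; apply: contra => /eqP h.
      by rewrite /x' (wz _ h) h mulr0 subr0.
    rewrite ltnS in hN; apply: leq_trans hN; apply: proper_card; apply/properP; split => //.
    exists i0; rewrite !inE.
      by apply/eqP => h; move: i0P; rewrite (wz _ h) ltxx.
    by rewrite negbK /x' /t divfK ?subrr // gt_eqF.
  - move=> i; rewrite /x' subr_ge0.
    case: (ltrP 0 (w i)) => hw.
      by rewrite -ler_pdivlMr // i0min.
    by apply: le_trans (x0 i); rewrite mulr_ge0_le0.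
  - move=> j; rewrite /x'.
    under eq_bigr => i _ do rewrite mulrBr mulrCA.
    by rewrite sumrB -mulr_sumr ws mulr0 subr0 hx.
move=> hno.
pose a' (j : J + I) i : nat := match j with inl j => a j i | inr i0 => ((i == i0) && (x i0 == 0)) end.
pose b' (j : J + I) : nat := match j with inl j => b j | inr _ => 0%N end.
have [|y hy] := @rat_sol_fun R I (J + I)%type a' b' x.
  case=> [j|i0] /=; first exact: hx.
  rewrite sum_pick; case: eqP => [->|]; by rewrite ?mulr0 ?mul0r.
exists y.
have yeq : forall i, ratr (y i) = x i :> R.
  move=> i; apply/eqP; rewrite -subr_eq0; apply/eqP.
  apply: NNPP => hne; apply: hno.
  pose w0 i := ratr (y i) - x i : R.
  have hw0s : forall j, \sum_i (a j i)%:R * w0 i = 0.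
    move=> j; under eq_bigr => k _ do rewrite /w0 mulrBr.
    rewrite sumrB hx; have := hy (inl j); rewrite /= => /(congr1 (@ratr R)).
    rewrite rmorph_sum rmorph_nat => <-.
    by apply/eqP; rewrite subr_eq0; apply/eqP; apply: eq_bigr => k _; rewrite rmorphM rmorph_nat.
  have hw0z : forall i, x i = 0 -> w0 i = 0.
    move=> k hk; have := hy (inr k); rewrite /= sum_pick hk eqxx mul1r /w0 => ->.
    by rewrite rmorph0 hk subrr.
  case: (ltrP 0 (w0 i)) => hp.
    by exists w0; split; [exists i|].
  exists (fun k => - w0 k); split; [exists i|split].
  - by rewrite oppr_gt0 lt_neqAle hp andbT; apply/eqP.
  - by move=> k /hw0z ->; rewrite oppr0.
  - by move=> j; under eq_bigr => k _ do rewrite mulrN; rewrite sumrN hw0s oppr0.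
split.
  by move=> i; rewrite -(ler0q R) yeq.
by move=> j; exact: (hy (inl j)).
Qed.

Close Scope ring_scope.

Open Scope ring_scope.

Lemma rat_scale (I : finType) (y : I -> rat) : (forall i, 0 <= y i) ->
  exists k : nat, (0 < k)%N /\ exists z : I -> nat, forall i, (z i)%:R = k%:R * y i.
Proof.
move=> y0.
pose k := (\prod_i `|denq (y i)|)%N.
exists k; split.
  by rewrite prodn_gt0 // => i; rewrite absz_gt0 gt_eqF // denq_gt0.
exists (fun i => (\prod_(j | j != i) `|denq (y j)| * `|numq (y i)|)%N) => i.
rewrite /k [in RHS](bigD1 i) //= !(natrM rat).
rewrite !natr_absz !ger0_norm ?numq_ge0 ?(ltW (denq_gt0 _)) //.
have e := divq_num_den (y i).
set n := numq (y i) in e *; set d := denq (y i) in e *.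
have d0 : d%:~R != 0 :> rat by rewrite intr_eq0 gt_eqF ?denq_gt0.
rewrite -e [_ * (_%:R)]mulrC -mulrA; congr (_ * _).
by rewrite mulrC divfK.
Qed.

Lemma rat_point_nat (R : realFieldType) (I J : finType) (a : J -> I -> nat) (b : J -> nat)
  (x : I -> R) : (forall i, 0 <= x i) ->
  (forall j, \sum_i (a j i)%:R * x i = (b j)%:R) ->
  exists k : nat, (0 < k)%N /\ exists z : I -> nat,
     forall j, (\sum_i a j i * z i = k * b j)%N.
Proof.
move=> x0 hx; have [y [y0 hy]] := rat_point_nonneg x0 hx.
have [k [k0 [z hz]]] := rat_scale y0.
exists k; split => // ; exists z => j.
apply/eqP; rewrite -(eqr_nat rat) natrM natr_sum -hy mulr_sumr; apply/eqP.
apply: eq_bigr => i _; by rewrite natrM hz mulrCA.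
Qed.

Close Scope ring_scope.

Section Hall.
Variable T : finType.
Variable adj : rel T.
Definition nbr (R0 S : {set T}) := [set a in R0 | [exists h in S, adj h a]].

Lemma nbr_sub R0 S : nbr R0 S \subset R0.
Proof. by apply/subsetP => a; rewrite inE => /andP []. Qed.

Lemma nbrS R0 (S1 S2 : {set T}) : S1 \subset S2 -> nbr R0 S1 \subset nbr R0 S2.
Proof.
move=> /subsetP s; apply/subsetP => a; rewrite !inE => /andP [-> /existsP [h /andP [hS ha]]].
by apply/existsP; exists h; rewrite s.
Qed.

Lemma hall n : forall L R0 : {set T}, #|L| < n ->
  (forall S : {set T}, S \subset L -> #|S| <= #|nbr R0 S|) ->
  exists f : T -> T, {in L &, injective f} /\ (forall h, h \in L -> (f h \in R0) && adj h (f h)).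
Proof.
elim: n => [//|n IH] L R0 hL hH.
case: (set_0Vmem L) => [->|[h0 h0L]].
  by exists id; split => [x y|h]; rewrite inE.
case: (boolP [exists S : {set T}, [&& S \proper L, S != set0 & #|nbr R0 S| <= #|S|]]).
  case/existsP => S /and3P [SL S0 hS].
  have SL' := proper_sub SL.
  have [f1 [f1i f1h]] : exists f : T -> T, {in S &, injective f} /\
      (forall h, h \in S -> (f h \in nbr R0 S) && adj h (f h)).
    apply: (IH); first exact: leq_trans (proper_card SL) hL.
    move=> S' S'S; have := hH S' (subset_trans S'S SL').
    suff -> : nbr (nbr R0 S) S' = nbr R0 S' by [].
    apply/setP => a; rewrite !inE; case: (a \in R0) => //=.
    case hx: [exists h in S', adj h a]; rewrite ?andbF ?andbT //.
    move/existsP: hx => [h /andP [hS' ha]].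
    by apply/existsP; exists h; rewrite ha (subsetP S'S).
  have [f2 [f2i f2h]] : exists f : T -> T, {in L :\: S &, injective f} /\
      (forall h, h \in L :\: S -> (f h \in R0 :\: nbr R0 S) && adj h (f h)).
    apply: (IH).
      apply: (leq_trans _ (hL : #|L| <= n)); rewrite cardsD (setIidPr SL') ltn_subrL.
      case/set0Pn: (S0) => x xS; have xL := subsetP SL' x xS.
      by rewrite !card_gt0; apply/andP; split; apply/set0Pn; exists x.
    move=> S' S'L.
    have hU := hH (S' :|: S) ltac:(by rewrite subUset SL' andbT (subset_trans S'L) ?subsetDl).
    have dis : #|S' :|: S| = #|S'| + #|S|.
      rewrite cardsU; suff -> : S' :&: S = set0 by rewrite cards0 subn0.
      apply/setP => x; rewrite !inE; case xS: (x \in S); rewrite ?andbF //= andbT.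
      by apply/negP => /(subsetP S'L); rewrite !inE xS.
    have sub : nbr R0 (S' :|: S) \subset nbr (R0 :\: nbr R0 S) S' :|: nbr R0 S.
      apply/subsetP => a; rewrite inE => /andP [aR /existsP [h /andP [hin ha]]].
      rewrite inE; case: (boolP (a \in nbr R0 S)) => aN; rewrite ?orbT //= orbF.
      rewrite inE; apply/andP; split; first by rewrite inE aN aR.
      move: hin; rewrite inE => /orP [hS1|hS2]; first by apply/existsP; exists h; rewrite hS1 ha.
      by move: aN; rewrite inE aR /= => /negP []; apply/existsP; exists h; rewrite hS2 ha.
    have := leq_trans hU (leq_trans (subset_leq_card sub) (leq_card_setU _ _)).
    rewrite dis => h1; have := leq_trans h1 (leq_add (leqnn _) hS); by rewrite leq_add2r.
  exists (fun h => if h \in S then f1 h else f2 h); split.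
    move=> x y xL yL /=.
    case xS: (x \in S); case yS: (y \in S).
    - by apply: f1i.
    - move=> e; have := f1h x xS; have := f2h y ltac:(by rewrite inE yS).
      by rewrite e inE => /andP [/andP [/negP ? _] _] /andP [].
    - move=> e; have := f1h y yS; have := f2h x ltac:(by rewrite inE xS).
      by rewrite e inE => /andP [/andP [/negP ? _] _] /andP [].
    - by apply: f2i; rewrite inE ?xS ?yS.
  move=> h hL'; case hS3: (h \in S).
    by have := f1h h hS3 => /andP [/(subsetP (nbr_sub _ _)) -> ->].
  have := f2h h ltac:(by rewrite inE hS3) => /andP [].
  by rewrite inE => /andP [_ ->] ->.
rewrite negb_exists => /forallP hB.
have hB' : forall S : {set T}, S \proper L -> S != set0 -> #|S| < #|nbr R0 S|.
  move=> S SL S0; have := hB S; rewrite SL S0 /= ltnNge.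
  by [].
have : 0 < #|nbr R0 [set h0]|.
  by apply: leq_trans (hH _ _); rewrite ?cards1 // sub1set.
rewrite card_gt0 => /set0Pn [a0]; rewrite inE => /andP [a0R /existsP [h' /andP]].
rewrite inE => [[/eqP -> ha0]].
have [f' [f'i f'h]] : exists f : T -> T, {in L :\ h0 &, injective f} /\
      (forall h, h \in L :\ h0 -> (f h \in R0 :\ a0) && adj h (f h)).
  apply: (IH).
    by apply: (leq_trans _ (hL : #|L| <= n)); rewrite (cardsD1 h0 L) h0L.
  move=> S' S'L; case: (set_0Vmem S') => [->|[x xS']]; first by rewrite cards0.
  have S'P : S' \proper L.
    apply/properP; split; first exact: subset_trans S'L (subsetDl _ _).
    by exists h0 => //; apply/negP => /(subsetP S'L); rewrite !inE eqxx.
  have := hB' S' S'P ltac:(by apply/set0Pn; exists x).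
  have -> : nbr (R0 :\ a0) S' = nbr R0 S' :\ a0.
    by apply/setP => a; rewrite !inE andbA.
  rewrite (cardsD1 a0 (nbr R0 S')); case: (a0 \in nbr R0 S') => //=.
  by move/ltnW.
exists (fun h => if h == h0 then a0 else f' h); split.
  move=> x y xL yL /=.
  case: eqP => [->|xh]; case: eqP => [->|yh] //.
  - move=> e; have := f'h y; rewrite !inE; move/eqP: yh => -> /(_ yL) /andP [].
    by rewrite -e eqxx.
  - move=> e; have := f'h x; rewrite !inE; move/eqP: xh => -> /(_ xL) /andP [].
    by rewrite e eqxx.
  - by apply: f'i; rewrite !inE; apply/andP; split => //; apply/eqP.
move=> h hL'; case: eqP => [->|hh]; first by rewrite a0R.
have := f'h h; rewrite !inE; move/eqP: hh => -> /(_ hL') /andP [/andP [_ ->] ->].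
by [].
Qed.
End Hall.

Section M.
Variable V : finType.
Local Notation K := (K V).
Local Notation C := (C V).

Lemma C_split (c : C) : exists H : {set V}, #|H|.*2 = #|V| /\ val c = [set H; ~: H].
Proof. by case: c => P /= /existsP [H /andP [/eqP h /eqP ->]]; exists H. Qed.

Lemma edge_pair_eq (e : K) h a : h \in val e -> a \in val e -> h != a -> val e = [set h; a].
Proof.
move=> he ae ha; apply/esym/eqP; rewrite eqEcard cards2 ha (eqP (valP e)) andbT.
by apply/subsetP => x; rewrite !inE => /orP [] /eqP ->.
Qed.

Lemma crosses_pair (c : C) (H : {set V}) (e : K) : val c = [set H; ~: H] ->
  crosses c e = [exists h, exists a, [&& h \in H, a \notin H & val e == [set h; a]]].
Proof.
move=> hc; rewrite /crosses hc.
apply/forallP/existsP.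
  move=> hf; have := hf H; have := hf (~: H); rewrite !inE !eqxx /= orbT /=.
  move=> /subsetPn [h he]; rewrite inE negbK => hH.
  move=> /subsetPn [a ae aH].
  exists h; apply/existsP; exists a; rewrite hH aH /=; apply/eqP; apply: edge_pair_eq => //.
  by apply: contraNneq aH => <-.
move=> [h /existsP [a /and3P [hH aH /eqP ->]]] X; apply/implyP; rewrite !inE => /orP [] /eqP ->.
  by apply/subsetPn; exists a; rewrite ?inE ?eqxx ?orbT.
by apply/subsetPn; exists h; rewrite ?inE ?eqxx ?negbK.
Qed.

Lemma sum_ind_card (P : pred K) (q : {set K}) :
  (\sum_(e | P e) (e \in q : nat) = #|[set e in q | P e]|)%N.
Proof.
rewrite -sum1dep_card.
rewrite [RHS](eq_bigl (fun e => P e && (e \in q))); last by move=> e; rewrite andbC.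
rewrite big_mkcondr /=; apply: eq_bigr => e _; by case: (e \in q).
Qed.

Lemma card1_uniq (T : finType) (A : {set T}) :
  (exists x, x \in A) -> (forall x y, x \in A -> y \in A -> x = y) -> #|A| == 1%N.
Proof.
move=> [x xA] u; apply/cards1P; exists x; apply/setP => y; rewrite inE.
by apply/idP/eqP => [yA|->//]; apply: u.
Qed.

Lemma matching_in_support (c : C) (y : K -> nat) (k : nat) : (0 < k)%N ->
  (forall e, (0 < y e)%N -> crosses c e) ->
  (forall a : V, (\sum_(e : K | a \in val e) y e)%N = k) ->
  exists q : {set K}, perfect_matching_of c q /\ forall e, e \in q -> (0 < y e)%N.
Proof.
move=> k0 ycr ydeg.
have [H [cardH hc]] := C_split c.
pose adj := fun h a : V => [exists e : K, [&& (0 < y e)%N, h \in val e & a \in val e]].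
have cardHC : #|~: H| = #|H|.
  by have := cardsC H; rewrite -cardH -addnn => /eqP; rewrite eqn_add2l => /eqP.
have pairs : forall e, (0 < y e)%N -> exists h a, [/\ h \in H, a \notin H & val e = [set h; a]].
  move=> e /ycr; rewrite (crosses_pair _ hc) => /existsP [h /existsP [a /and3P [? ? /eqP ?]]].
  by exists h, a.
have cnt : forall X : {set V}, (\sum_(h in X) \sum_(e : K | h \in val e) y e =
                                 \sum_(e : K) y e * #|X :&: val e|)%N.
  move=> X; rewrite (exchange_big_dep predT) //=; apply: eq_bigr => e _.
  rewrite (eq_bigl (fun h => h \in X :&: val e)); last by move=> h; rewrite inE.
  by rewrite sum_nat_const mulnC.
have hall_cond : forall S : {set V}, S \subset H -> (#|S| <= #|nbr adj (~: H) S|)%N.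
  move=> S SH; rewrite -(leq_pmul2l k0).
  have -> : (k * #|S| = \sum_(h in S) \sum_(e : K | h \in val e) y e)%N.
    by rewrite (eq_bigr (fun _ => k)) => [|h _]; [rewrite sum_nat_const mulnC | rewrite ydeg].
  have -> : (k * #|nbr adj (~: H) S| = \sum_(h in nbr adj (~: H) S) \sum_(e : K | h \in val e) y e)%N.
    by rewrite (eq_bigr (fun _ => k)) => [|h _]; [rewrite sum_nat_const mulnC | rewrite ydeg].
  rewrite !cnt; apply: leq_sum => e _.
  case: (posnP (y e)) => [->|ye]; first by rewrite !mul0n.
  rewrite leq_pmul2l //.
  have [h [a [hH aH ee]]] := pairs e ye.
  rewrite ee.
  have aS : a \notin S by apply: contra aH => /(subsetP SH).
  case: (boolP (h \in S)) => hS; last first.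
    suff -> : S :&: [set h; a] = set0 by rewrite cards0.
    apply/setP => x; rewrite !inE; apply/negP => /andP [xS /orP [] /eqP xe].
      by move: hS; rewrite -xe xS.
    by move: aS; rewrite -xe xS.
  have sub1 : S :&: [set h; a] \subset [set h].
    apply/subsetP => x; rewrite !inE => /andP [xS /orP [//|/eqP xa]].
    by move: aS; rewrite -xa xS.
  apply: leq_trans (subset_leq_card sub1) _.
  rewrite cards1 card_gt0; apply/set0Pn; exists a; rewrite !inE eqxx orbT andbT aH /=.
  apply/existsP; exists h; rewrite hS /=; apply/existsP; exists e.
  by rewrite ye ee !inE !eqxx ?orbT.
have [f [finj fh]] := @hall V adj #|H|.+1 H (~: H) (ltnSn _) hall_cond.
have fH : forall h, h \in H -> f h \notin H.
  by move=> h /fh /andP []; rewrite inE.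
have fsurj : forall a, a \notin H -> exists2 h, h \in H & a = f h.
  move=> a aH.
  have im : f @: H = ~: H.
    apply/eqP; rewrite eqEcard card_in_imset // cardHC leqnn andbT.
    by apply/subsetP => x /imsetP [h hH ->]; rewrite inE fH.
  by move: aH; rewrite -in_setC -im => /imsetP.
pose q := [set e : K | (0 < y e)%N && [exists h in H, (h \in val e) && (f h \in val e)]].
exists q; split; last by move=> e; rewrite inE => /andP [].
have qform : forall e, e \in q -> exists2 h, h \in H & val e = [set h; f h].
  move=> e; rewrite inE => /andP [_ /existsP [h /and3P [hH he fhe]]].
  exists h => //; apply: edge_pair_eq => //; apply: contraNneq (fH h hH) => <-; exact: hH.
have adjq : forall h, h \in H -> exists2 e, e \in q & (h \in val e) && (f h \in val e).
  move=> h hH; have := fh h hH => /andP [_ /existsP [e /and3P [ye he fhe]]].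
  exists e; rewrite ?he ?fhe //.
  by rewrite inE ye; apply/existsP; exists h; rewrite hH he fhe.
apply/andP; split.
  apply/forallP => e; apply/implyP => eq; move: eq; rewrite inE => /andP [ye _].
  exact: ycr.
apply/forallP => v; apply: card1_uniq.
  case: (boolP (v \in H)) => vH.
    by have [e eq /andP [ve _]] := adjq v vH; exists e; rewrite inE eq ve.
  have [h hH ->] := fsurj v vH.
  by have [e eq /andP [_ ve]] := adjq h hH; exists e; rewrite inE eq ve.
move=> e1 e2; rewrite [e1 \in _]inE => /andP [e1q v1]; rewrite inE => /andP [e2q v2].
have [h1 h1H e1e] := qform _ e1q; have [h2 h2H e2e] := qform _ e2q.
apply: val_inj; rewrite e1e e2e.
move: v1 v2; rewrite e1e e2e !inE.
case: (boolP (v \in H)) => vH.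
  case/orP => /eqP v1; last by move: (fH _ h1H); rewrite -v1 vH.
  case/orP => /eqP v2; last by move: (fH _ h2H); rewrite -v2 vH.
  by rewrite -v1 -v2.
case/orP => /eqP v1; first by move: vH; rewrite v1 h1H.
case/orP => /eqP v2; first by move: vH; rewrite v2 h2H.
suff e : h1 = h2 by rewrite e.
apply: finj => //; by rewrite -v1 -v2.
Qed.


Lemma edge_has_vertex (e : K) : exists a, a \in val e.
Proof. by apply/set0Pn; rewrite -card_gt0 (eqP (valP e)). Qed.

Lemma decompose (c : C) k : forall y : K -> nat,
  (forall e, (0 < y e)%N -> crosses c e) ->
  (forall a : V, (\sum_(e : K | a \in val e) y e)%N = k) ->
  exists qs : seq {set K}, [/\ size qs = k, all (perfect_matching_of c) qs &
     forall e, y e = (\sum_(q <- qs) (e \in q : nat))%N].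
Proof.
elim: k => [|k IH] y ycr ydeg.
  exists [::]; split => // e; rewrite big_nil.
  have [a ae] := edge_has_vertex e.
  have := ydeg a; move/eqP; rewrite sum_nat_eq0 => /forallP /(_ e).
  by rewrite ae => /eqP.
have [q [qpm qy]] := matching_in_support (ltn0Sn k) ycr ydeg.
pose y' e := (y e - (e \in q))%N.
have yy : forall e, y e = (y' e + (e \in q))%N.
  move=> e; rewrite /y' subnK //; case eq: (e \in q) => //; exact: qy.
have y'cr : forall e, (0 < y' e)%N -> crosses c e.
  move=> e ye; apply: ycr; rewrite yy; exact: leq_trans ye (leq_addr _ _).
have y'deg : forall a : V, (\sum_(e : K | a \in val e) y' e)%N = k.
  move=> a; have := ydeg a; under eq_bigr => e _ do rewrite yy.
  rewrite big_split /= sum_ind_card.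
  move: qpm => /andP [_ /forallP /(_ a) /eqP ->].
  by rewrite addn1 => [[]].
have [qs [sz pm hy]] := IH y' y'cr y'deg.
exists (q :: qs); split => //=; first by rewrite sz.
  by rewrite qpm.
by move=> e; rewrite big_cons yy hy addnC.
Qed.

End M.

Lemma sum_bool_card (T : finType) (P : pred T) : (\sum_i (P i : nat) = #|[set i | P i]|)%N.
Proof. by rewrite -sum1dep_card [RHS]big_mkcond /=; apply: eq_bigr => i _; case: (P i). Qed.

Lemma table_exists (T : finType) (m : T -> nat) (r : nat) : (\sum_c m c)%N = r ->
  exists HA : 'I_r -> T, forall c, #|[set d | HA d == c]| = m c.
Proof.
move=> <-.
pose cs := flatten [seq nseq (m c) c | c <- index_enum T].
have sz : size cs = (\sum_c m c)%N.
  rewrite size_flatten /shape -map_comp sumnE big_map; apply: eq_bigr => c _.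
  by rewrite /= size_nseq.
exists (fun d => tnth (tcast sz (in_tuple cs)) d) => c.
rewrite -sum1dep_card -(@big_tuple nat 0%N addn T _ (tcast sz (in_tuple cs)) (fun x => x == c) (fun _ => 1%N)).
rewrite val_tcast /= sum1_count count_flatten sumnE big_map.
rewrite big_map (bigD1 c) //= count_nseq /= eqxx mul1n big1 ?addn0 // => c' /negbTE hc.
by rewrite count_nseq /= hc.
Qed.

Section P0.
Variable V : finType.
Local Notation K := (K V).
Local Notation C := (C V).
Local Notation vec := (vec V).

Lemma all_in_cons (M : vec -> Prop) x s : all_in M (x :: s) <-> M x /\ all_in M s.
Proof. by []. Qed.

Lemma all_in_sum (M : vec -> Prop) (s : seq vec) (F G : vec -> nat) :
  all_in M s -> (forall x, M x -> F x = G x) ->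
  (\sum_(x <- s) F x = \sum_(x <- s) G x)%N.
Proof.
elim: s => [|x s IH] /=; first by rewrite !big_nil.
by move=> [Mx Ms] h; rewrite !big_cons h // IH.
Qed.

Lemma all_in_sum_le (M : vec -> Prop) (s : seq vec) (F G : vec -> nat) :
  all_in M s -> (forall x, M x -> F x <= G x)%N ->
  (\sum_(x <- s) F x <= \sum_(x <- s) G x)%N.
Proof.
elim: s => [|x s IH] /=; first by rewrite !big_nil.
by move=> [Mx Ms] h; rewrite !big_cons leq_add // ?h // IH.
Qed.

Lemma all_in_map (M : vec -> Prop) (T : Type) (f : T -> vec) (l : seq T) :
  (forall t, M (f t)) -> all_in M (map f l).
Proof. by move=> h; elim: l => //= t l IH; split. Qed.

Lemma all_in_cat (M : vec -> Prop) s1 s2 : all_in M s1 -> all_in M s2 -> all_in M (s1 ++ s2).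
Proof. by elim: s1 => //= x s1 IH [? ?] ?; split => //; apply: IH. Qed.



Lemma PM_deg (x : vec) : PM x -> forall a : V, (\sum_(e : K | a \in val e) x.1 e = 1)%N.
Proof.
move=> [c [q [pm [h1 h2]]]] a.
under eq_bigr => e _ do rewrite h1.
rewrite sum_ind_card; move: pm => /andP [_ /forallP /(_ a) /eqP]; exact.
Qed.

Lemma PM_sum2 (x : vec) : PM x -> (\sum_(c : C) x.2 c = 1)%N.
Proof.
move=> [c [q [pm [h1 h2]]]].
under eq_bigr => c' _ do rewrite h2.
by rewrite (bigD1 c) //= eqxx big1 // => c' /negbTE ->.
Qed.

Lemma PM_le1 (x : vec) : PM x -> (forall e, x.1 e <= 1)%N /\ (forall c, x.2 c <= 1)%N.
Proof. by move=> [c [q [pm [h1 h2]]]]; split => ?; rewrite ?h1 ?h2 leq_b1. Qed.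

Lemma PM_cross (x : vec) : PM x -> forall c e, x.2 c != 0%N -> x.1 e != 0%N -> crosses c e.
Proof.
move=> [c [q [pm [h1 h2]]]] c' e; rewrite h1 h2 => hc he.
have -> : c' = c by apply/eqP; move: hc; case: (c' == c).
have eq : e \in q by move: he; case: (e \in q).
by move: pm => /andP [/forallP /(_ e) /implyP /(_ eq)].
Qed.

End P0.

Section D0.
Variable V : finType.
Local Notation K := (K V).
Local Notation C := (C V).
Local Notation vec := (vec V).

Lemma all_in_nseq (M : vec -> Prop) n x : M x -> all_in M (nseq n x).
Proof. by move=> h; elim: n => //= n IH; split. Qed.

Lemma all_in_flat (M : vec -> Prop) (T : Type) (f : T -> seq vec) (l : seq T) :
  (forall t, all_in M (f t)) -> all_in M (flatten (map f l)).
Proof. by move=> h; elim: l => //= t l IH; apply: all_in_cat. Qed.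

Lemma B_empty (E : {set K}) : #|V| = 0%N -> B_factorizable E.
Proof.
move=> V0 v _ _.
pose xc (c : C) : vec := (fun _ => 0%N, fun c' => (c' == c : nat)).
exists (flatten (map (fun c => nseq (v.2 c) (xc c)) (index_enum C))).
split.
  apply: all_in_flat => c; apply: all_in_nseq; exists c, set0; split; last by split => e; rewrite ?inE.
  apply/andP; split; first by apply/forallP => e; rewrite inE.
  by apply/forallP => a; have := card0_eq V0 a; rewrite !inE.
split.
  by move=> e; have [a _] := edge_has_vertex e; have := card0_eq V0 a; rewrite !inE.
move=> c; rewrite big_flatten /= big_map.
rewrite (bigD1 c) //= big_nseq iter_addn_0 /= eqxx mul1n big1 ?addn0 // => c' /negbTE hc.
by rewrite big_nseq iter_addn_0 /= eq_sym hc mul0n.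
Qed.
End D0.

Section D1.
Variable R : realFieldType.
Variable V : finType.
Local Notation K := (K V).
Local Notation C := (C V).
Local Notation vec := (vec V).

Lemma hap_to_B (E : {set K}) (r : nat) (a0 : V) :
  regular E r -> HAP_condition R E r -> B_factorizable E.
Proof.
move=> hreg hap v [k [k0 [s [sPM [s1 s2]]]]] hv1.
rewrite /= in s1 s2.
have sizes : size s = (k * r)%N.
  rewrite -(hreg a0) -sum_ind_card big_distrr /=.
  under eq_bigr => e _ do rewrite -hv1 s1.
  rewrite exchange_big /= (all_in_sum (G := fun _ => 1%N) sPM) ?sum1_size //.
  by move=> x hx; apply: PM_deg.
have sumv2 : (\sum_c v.2 c = r)%N.
  apply/eqP; rewrite -(eqn_pmul2l k0) -sizes big_distrr /=.
  under eq_bigr => c _ do rewrite s2.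
  rewrite exchange_big /= (all_in_sum (G := fun _ => 1%N) sPM) ?sum1_size //.
  by move=> x hx; apply: PM_sum2.
have [HA hHA] := table_exists sumv2.
pose w c e := (\sum_(x <- s) x.2 c * x.1 e)%N.
have W1 : forall e, (\sum_c w c e = k * v.1 e)%N.
  move=> e; rewrite s1 /w exchange_big /=; apply: (all_in_sum sPM) => x hx.
  by rewrite -big_distrl /= PM_sum2 // mul1n.
have W2 : forall c a, (\sum_(e : K | a \in val e) w c e = k * v.2 c)%N.
  move=> c a; rewrite s2 /w exchange_big /=; apply: (all_in_sum sPM) => x hx.
  by rewrite -big_distrr /= PM_deg // muln1.
have W3 : forall c e, ~~ crosses c e -> w c e = 0%N.
  move=> c e nc; rewrite /w (all_in_sum (G := fun _ => 0%N) sPM); first by rewrite big1.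
  move=> x hx; case: (boolP (x.2 c == 0%N)) => [/eqP->//|h1].
  case: (boolP (x.1 e == 0%N)) => [/eqP->|h2]; first by rewrite muln0.
  by move: nc; rewrite (PM_cross hx h1 h2).
have W5 : forall c e, (w c e <= k * v.2 c)%N.
  move=> c e; rewrite s2 /w; apply: (all_in_sum_le sPM) => x hx.
  have [h1 _] := PM_le1 hx.
  by rewrite -{2}(muln1 (x.2 c)) leq_mul2l h1 orbT.
have W4 : forall c e, (w c e <= k * v.1 e)%N.
  by move=> c e; rewrite -W1 (bigD1 c) //= leq_addr.
pose xR e d : R := ((w (HA d) e)%:R / (k * v.2 (HA d))%:R)%R.
have cnt_pos : forall d, (0 < v.2 (HA d))%N.
  by move=> d; rewrite -hHA card_gt0; apply/set0Pn; exists d; rewrite inE.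
have kv0 : forall d, ((k * v.2 (HA d))%:R != 0 :> R)%R.
  by move=> d; rewrite pnatr_eq0 muln_eq0 negb_or -!lt0n k0 cnt_pos.
have sumHA : forall (F : C -> R), (\sum_d F (HA d) = \sum_c (v.2 c)%:R * F c)%R.
  move=> F; rewrite (partition_big HA predT) //=; apply: eq_bigr => c _.
  rewrite (eq_bigr (fun _ => F c)) => [|d /eqP -> //].
  by rewrite sumr_const -hHA mulr_natl cardsE.
have P1 : forall e, e \in E -> (\sum_d xR e d = 1)%R.
  move=> e eE; rewrite /xR (sumHA (fun c => (w c e)%:R / (k * v.2 c)%:R)%R).
  transitivity (\sum_c (w c e)%:R / k%:R : R)%R.
    apply: eq_bigr => c _; case: (posnP (v.2 c)) => hc.
      have := W5 c e; rewrite hc muln0 leqn0 => /eqP ->.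
      by rewrite !mul0r.
    have n0 : ((v.2 c)%:R != 0 :> R)%R by rewrite pnatr_eq0 -lt0n.
    rewrite natrM invfM mulrCA; congr (_ * _)%R.
    by rewrite mulrCA divff ?mulr1.
  rewrite -mulr_suml -natr_sum W1 hv1 eE muln1 divff // pnatr_eq0 -lt0n //.
have P2 : forall e d, e \notin E -> xR e d = 0%R.
  move=> e d eE; rewrite /xR.
  have -> : w (HA d) e = 0%N.
    by apply/eqP; rewrite -leqn0; have := W4 (HA d) e; rewrite hv1 (negbTE eE) muln0.
  by rewrite mul0r.
have P3 : forall d (a : V), (\sum_(e : K | a \in val e) xR e d = 1)%R.
  by move=> d a; rewrite /xR -mulr_suml -natr_sum W2 divff.
have P0 : forall e d, (0 <= xR e d)%R.
  by move=> e d; rewrite /xR divr_ge0 // ler0n.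
have P4 : forall e d, e \in E -> (xR e d <= 1)%R.
  move=> e d eE; rewrite -(P1 e eE) (bigD1 d) //= lerDl sumr_ge0 //.
have P5 : forall e d, ~~ crosses (HA d) e -> xR e d = 0%R.
  by move=> e d nc; rewrite /xR W3 // mul0r.
have inP : in_P E HA xR.
  split => //.
  - by move=> e d eE; apply/andP; split; [exact: P0 | exact: P4].
  - by move=> e d eE nc; rewrite P5.
have [x [[Q1 Q2 Q3 Q4 Q5] [z hz]]] := hap HA (ex_intro _ xR inP).
have x01 : forall e d, x e d = ((x e d == 1%R) : nat)%:R%R.
  move=> e d; case: (boolP (e \in E)) => eE; last by rewrite Q2 // eq_sym oner_eq0.
  have /andP [h0 h1] := Q4 e d eE.
  rewrite hz in h0 h1 *; rewrite ler0z in h0; rewrite lerz1 in h1.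
  have : z e d = 0%R \/ z e d = 1%R.
    by case: (z e d) h0 h1 => [[|[|n]]|n] //; auto.
  case=> ->; first by rewrite rmorph0 eq_sym oner_eq0.
  by rewrite rmorph1 eqxx.
pose g d := [set e | x e d == 1%R].
have gpm : forall d, perfect_matching_of (HA d) (g d).
  move=> d; apply/andP; split.
    apply/forallP => e; apply/implyP; rewrite inE => /eqP x1.
    have eE : e \in E.
      by apply: contraT => eE; move: x1; rewrite Q2 // => /eqP; rewrite eq_sym oner_eq0.
    by apply: contraT => nc; move: x1; rewrite Q5 // => /eqP; rewrite eq_sym oner_eq0.
  apply/forallP => a; have := Q3 d a.
  under eq_bigr => e _ do rewrite x01.
  rewrite -natr_sum.
  have -> : (\sum_(e : K | a \in val e) ((x e d == 1%R) : nat) =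
             \sum_(e : K | a \in val e) (e \in g d : nat))%N.
    by apply: eq_bigr => e _; rewrite inE.
  by rewrite sum_ind_card => /eqP; rewrite pnatr_eq1.
exists [seq ((fun e => (e \in g d : nat)), (fun c => (c == HA d : nat))) : vec | d <- index_enum 'I_r].
split; first by apply: all_in_map => d; exists (HA d), (g d).
split.
- move=> e /=; rewrite big_map hv1.
  apply/eqP; rewrite -(eqr_nat R) natr_sum.
  under eq_bigr => d _ do rewrite -[X in X%:R%R]/(nat_of_bool (e \in g d)) inE -x01.
  case: (boolP (e \in E)) => eE; first by rewrite Q1.
  by rewrite big1 // => d _; rewrite Q2.
- move=> c /=; rewrite big_map -hHA.
  by rewrite -sum_bool_card; apply: eq_bigr => d _; rewrite eq_sym.
Qed.

End D1.

Lemma sum_pick_nat (I : finType) (i0 : I) (P : bool) (f : I -> nat) :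
  (\sum_i ((i == i0) && P) * f i = P * f i0)%N.
Proof.
rewrite (bigD1 i0) //= eqxx /= big1 ?addn0 // => i /negbTE ->.
by rewrite mul0n.
Qed.

Section D2.
Variable V : finType.
Local Notation K := (K V).
Local Notation C := (C V).
Local Notation vec := (vec V).

Lemma assign (r : nat) (HA : 'I_r -> C) (s : seq vec) : all_in (@PM V) s ->
  forall D : {set 'I_r}, (forall c, \sum_(x <- s) x.2 c = #|[set d in D | HA d == c]|)%N ->
  exists g : 'I_r -> {set K}, (forall d, d \in D -> perfect_matching_of (HA d) (g d)) /\
     forall e, (\sum_(d in D) (e \in g d : nat) = \sum_(x <- s) x.1 e)%N.
Proof.
elim: s => [|x s IH] /=.
  move=> _ D hD; exists (fun _ => set0).
  have D0 : forall d, d \notin D.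
    move=> d; apply/negP => dD; have := hD (HA d); rewrite big_nil => /esym /eqP.
    by rewrite cards_eq0 => /eqP /setP /(_ d); rewrite !inE dD eqxx.
  split => [d|e]; first by rewrite (negbTE (D0 d)).
  by rewrite big_nil big1 // => d; rewrite (negbTE (D0 d)).
move=> [[c0 [q0 [pm [h1 h2]]]] sPM] D hD.
have : (0 < #|[set d in D | HA d == c0]|)%N by rewrite -hD big_cons h2 eqxx.
rewrite card_gt0 => /set0Pn [d0]; rewrite inE => /andP [d0D /eqP hd0].
have [|g [gpm gsum]] := IH sPM (D :\ d0).
  move=> c.
  have e1 : #|[set d in D | HA d == c]| = ((c == c0) + #|[set d in D :\ d0 | HA d == c]|)%N.
    rewrite (cardsD1 d0 [set d in D | HA d == c]) !inE d0D hd0 eq_sym /=.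
    suff -> : [set d in D | HA d == c] :\ d0 = [set d in D :\ d0 | HA d == c] by [].
    by apply/setP => d; rewrite !inE andbA.
  by have := hD c; rewrite big_cons h2 e1 => /eqP; rewrite eqn_add2l => /eqP.
exists (fun d => if d == d0 then q0 else g d); split.
  move=> d dD; case: eqP => [->|/eqP nd]; first by rewrite hd0.
  by apply: gpm; rewrite !inE nd.
move=> e; rewrite big_cons (bigD1 d0) //= eqxx h1; congr (_ + _)%N.
rewrite -gsum; apply: eq_big => [d|d /andP [_ /negbTE ->] //].
by rewrite !inE andbC.
Qed.

Lemma sum_pair (U : nmodType) r (F : K -> 'I_r -> U) :
  (\sum_(p : K * 'I_r) F p.1 p.2 = \sum_e \sum_d F e d)%R.
Proof. by rewrite pair_big. Qed.

Lemma sum_pair_nat r (G : K * 'I_r -> nat) :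
  (\sum_(p : K * 'I_r) G p = \sum_e \sum_d G (e, d))%N.
Proof. by rewrite pair_big; apply: eq_bigr => [[]]. Qed.

Lemma build_list (r k : nat) (HA : 'I_r -> C) (z : K -> 'I_r -> nat) :
  (forall e d, (0 < z e d)%N -> crosses (HA d) e) ->
  (forall d (a : V), (\sum_(e : K | a \in val e) z e d)%N = k) ->
  forall l : seq 'I_r, exists s : seq vec, [/\ all_in (@PM V) s,
     forall e, (\sum_(x <- s) x.1 e = \sum_(d <- l) z e d)%N &
     forall c, (\sum_(x <- s) x.2 c = \sum_(d <- l) k * (c == HA d))%N].
Proof.
move=> zc zd; elim => [|d l [s [sPM s1 s2]]].
  by exists [::]; split => // [e|c]; rewrite !big_nil.
have [qs [sz pm hz]] := @decompose V (HA d) k (fun e => z e d) (fun e hz => zc e d hz) (zd d).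
exists (map (fun q : {set K} => (((fun e => (e \in q : nat)), (fun c => (c == HA d : nat))) : vec)) qs ++ s).
split.
- apply: all_in_cat => //.
  elim: qs {sz hz} pm => //= q qs IH /andP [pq pqs]; split; last exact: IH.
  by exists (HA d), q.
- by move=> e; rewrite big_cat /= big_map s1 big_cons hz.
- move=> c; rewrite big_cat /= big_map s2 big_cons; congr (_ + _)%N.
  by rewrite big_const_seq count_predT sz iter_addn_0 mulnC.
Qed.

Variable R : realFieldType.

Lemma B_to_hap (E : {set K}) (r : nat) : B_factorizable E -> HAP_condition R E r.
Proof.
move=> hB HA [x [X1 X2 X3 X4 X5]].
pose I := (K * 'I_r)%type.
pose J := ((K + ('I_r * V)) + (K * 'I_r))%type.
pose a (j : J) (p : I) : nat := match j with
  | inl (inl e0) => (p.1 == e0)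
  | inl (inr (d0, a0)) => (p.2 == d0) && (a0 \in val p.1)
  | inr ed => (p == ed) && ~~ crosses (HA ed.2) ed.1 end.
pose b (j : J) : nat := match j with
  | inl (inl e0) => (e0 \in E)
  | inl (inr _) => 1%N
  | inr _ => 0%N end.
pose x' (p : I) := x p.1 p.2.
have x0 : forall e d, (0 <= x e d)%R.
  move=> e d; case: (boolP (e \in E)) => eE; first by case/andP: (X4 e d eE).
  by rewrite X2.
have heq : forall j, (\sum_i (a j i)%:R * x' i = (b j)%:R :> R)%R.
  case=> [[e0|[d0 a0]]|[e0 d0]] /=.
  - rewrite /x' (sum_pair (fun e d => ((e == e0) : nat)%:R * x e d)%R).
    rewrite (bigD1 e0) //= [X in (_ + X)%R]big1 => [|e /negbTE ->]; last first.
      by rewrite big1 // => d _; rewrite mul0r.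
    rewrite addr0 eqxx; under eq_bigr => d _ do rewrite mul1r.
    case: (boolP (e0 \in E)) => eE; first by rewrite X1.
    by rewrite big1 // => d _; rewrite X2.
  - rewrite /x' (sum_pair (fun e d => ((d == d0) && (a0 \in val e) : nat)%:R * x e d)%R).
    under eq_bigr => e _ do rewrite sum_pick.
    rewrite -[RHS](X3 d0 a0) [RHS]big_mkcond /=; apply: eq_bigr => e _.
    by case: (a0 \in val e); rewrite ?mul1r ?mul0r.
  - rewrite (@sum_pick _ _ (e0, d0)) /x' /=.
    case: (boolP (crosses (HA d0) e0)) => //= hc; first by rewrite mul0r.
    case: (boolP (e0 \in E)) => eE; first by rewrite X5 // mulr0.
    by rewrite X2 // mulr0.
have [k [k0 [z hz]]] := @rat_point_nat R I J a b x' (fun p => x0 p.1 p.2) heq.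
pose zz e d := z (e, d).
have Z1 : forall e, (\sum_d zz e d = k * (e \in E))%N.
  move=> e; rewrite -(hz (inl (inl e))) /= (sum_pair_nat (fun p => (p.1 == e) * z p)%N).
  rewrite (bigD1 e) //= [X in (_ + X)%N]big1 => [|e' /negbTE ->]; last by rewrite big1.
  by rewrite addn0; apply: eq_bigr => d _; rewrite eqxx mul1n.
have Z2 : forall d (a0 : V), (\sum_(e : K | a0 \in val e) zz e d = k)%N.
  move=> d a0; have := hz (inl (inr (d, a0))); rewrite /= muln1 => <-.
  rewrite (sum_pair_nat (fun p => ((p.2 == d) && (a0 \in val p.1)) * z p)%N).
  under [RHS]eq_bigr => e _ do rewrite (@sum_pick_nat _ d (a0 \in val e) (fun d' => z (e, d'))).
  rewrite big_mkcond /=; apply: eq_bigr => e _.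
  by case: (a0 \in val e); rewrite ?mul1n ?mul0n.
have Z3 : forall e d, (0 < zz e d)%N -> crosses (HA d) e.
  move=> e d; apply: contraTT => nc; have := hz (inr (e, d)).
  by rewrite /= muln0 sum_pick_nat nc mul1n /zz => ->.
have [s [sPM s1 s2]] := build_list Z3 Z2 (index_enum 'I_r).
pose v : vec := ((fun e => (e \in E : nat)), (fun c => #|[set d | HA d == c]|)).
have Nv : Ncone (@PM V) v.
  apply: hB => //; exists k; split => //; exists s; split => //; split.
    by move=> e; rewrite s1 /= -Z1.
  move=> c; rewrite s2 /= -big_distrr /= sum_bool_card.
    suff -> : [set d | HA d == c] = [set i | c == HA i] by [].
    by apply/setP => d; rewrite !inE eq_sym.
case: Nv => s' [s'PM [t1 t2]].
have t2' : forall c, (\sum_(x <- s') x.2 c = #|[set d in [set: 'I_r] | HA d == c]|)%N.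
  by move=> c; rewrite -t2 /=; apply: eq_card => d; rewrite !inE.
have [g [gpm gsum]] := assign s'PM t2'.
have gpm' : forall d, perfect_matching_of (HA d) (g d) by move=> d; apply: gpm; rewrite inE.
exists (fun e d => ((e \in g d : nat)%:R : R)%R); split; last first.
  by exists (fun e d => Posz (e \in g d)).
have gs : forall e, (\sum_d (e \in g d : nat) = (e \in E : nat))%N.
  move=> e; rewrite (_ : (e \in E : nat) = v.1 e) // t1 -gsum; apply: eq_bigl => d; by rewrite inE.
split.
- by move=> e eE; rewrite -natr_sum gs eE.
- move=> e d eE; have := gs e; rewrite (negbTE eE) => /eqP.
  by rewrite sum_nat_eq0 => /forallP /(_ d) /eqP ->.
- move=> d a0; rewrite -natr_sum sum_ind_card.
  by have := gpm' d => /andP [_ /forallP /(_ a0) /eqP ->].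
- by move=> e d _; case: (e \in g d) => /=; rewrite ?lexx ?ler01.
- move=> e d _ nc; case eg: (e \in g d) => //.
  by move: nc; have := gpm' d => /andP [/forallP /(_ e) /implyP /(_ eg) -> _].
Qed.


End D2.

Lemma regular_full (V : finType) : regular [set: K V] #|V|.-1.
Proof.
move=> a.
have -> : [set e in [set: K V] | a \in val e] = [set e : K V | a \in val e].
  by apply/setP => e; rewrite !inE.
rewrite -(card_imset _ val_inj).
have -> : [set val e | e in [set e : K V | a \in val e]] = [set [set a; b] | b in [set~ a]].
  apply/setP => X; apply/imsetP/imsetP.
  - move=> [e]; rewrite inE => ae ->.
    have : #|val e :\ a| = 1%N.
      by have := cardsD1 a (val e); rewrite ae (eqP (valP e)) => [[]].
    move/eqP/cards1P => [b hb].
    have : b \in val e :\ a by rewrite hb set11.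
    rewrite inE => /andP [ba be].
    move: ba; rewrite inE => ba; exists b; first by rewrite !inE.
    by apply: (edge_pair_eq ae be); rewrite eq_sym.
  - move=> [b]; rewrite !inE => ba ->.
    have p : #|[set a; b]| == 2 by rewrite cards2 (eq_sym a) ba.
    by exists (exist _ [set a; b] p : K V) => //; rewrite inE /= set21.
rewrite card_in_imset ?cardsC1 //.
move=> b1 b2; rewrite !inE => b1a b2a e.
have : b1 \in [set a; b2] by rewrite -e !inE eqxx orbT.
by rewrite !inE (negbTE b1a) /= => /eqP.
Qed.

Unset Implicit Arguments.
Theorem mainTheorem4 (R : realFieldType) (V : finType) (hV : ~~ odd #|V|) :
  (forall (E : {set K V}) (r : nat), regular E r ->
     (B_factorizable E <-> HAP_condition R E r)) /\
  (B_factorizable [set: K V] <-> HAP_condition R [set: K V] #|V|.-1).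
Proof.
have P1 : forall (E : {set K V}) (r : nat), regular E r ->
     (B_factorizable E <-> HAP_condition R E r).
  move=> E r hreg; split; first exact: B_to_hap.
  case: (posnP #|V|) => [V0 _|V0]; first exact: B_empty.
  case: (pickP V) => [a0 _|h]; first exact: hap_to_B.
  by move: V0; rewrite eq_card0.
split => //; apply: P1; exact: regular_full.
Qed.
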